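(* Let $\rho\in(0,1)$, let $N_1,N_2$ be positive integers, $n=N_1+N_2$, and let $X_0(1)>X_0(2)>\cdots>X_0(n)$ be integers. Put $Y^{(1)}=(X_0(1),\dots,X_0(N_1))$, $Y^{(2)}=(X_0(N_1+1),\dots,X_0(N_1+N_2))$ and $X=(X_0(1),\dots,X_0(n))$. Then for every $0\le k\le N_1-1$ and every $z\in\mathbb{Z}$, $$h^{n,X}_{k+N_2}(0,z)=\sum_{z_3\in\mathbb{Z}}\big(Q^{N_2}(z_3,z)-G^{Y^{(2)}}_{0,N_2}(z_3,z)\big)\,h^{N_1,Y^{(1)}}_k(0,z_3).$$
   Context: $Q(x,y)=(1-\rho)^{x-y-1}\rho\,\mathbf{1}_{x>y}$ on $\mathbb{Z}\times\mathbb{Z}$, $Q^m$ its $m$-th matrix power. For $f:\mathbb{Z}\to\mathbb{R}$ let $(Q^* )^{-1}f(z)=\frac1\rho f(z-1)-\frac{1-\rho}{\rho}f(z)$. For $m\ge1$, integers $Y(1)>\cdots>Y(m)$, and $0\le k<m$, $h^{m,Y}_k(l,z)$ ($0\le l\le k$, $z\in\mathbb{Z}$) is the unique solution of: $(Q^* )^{-1}h^{m,Y}_k(l,\cdot)(z)=h^{m,Y}_k(l+1,z)$ for $l<k$; $h^{m,Y}_k(k,z)=\rho(1-\rho)^{Y(m-k)-z-1}$; $h^{m,Y}_k(l,Y(m-l))=0$ for $l<k$. Further $G^{Y}_{0,m}(z_1,z_2)=\sum_{k=0}^{m-1}\frac{1-\rho}{\rho}Q^{m-k}(z_1,Y(m-k))\,h^{m,Y}_k(0,z_2)$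 for $z_1,z_2\in\mathbb{Z}$. *)

(* Defs.v *)
From Stdlib Require Import Reals ZArith Lra Lia.
From Coquelicot Require Import Coquelicot.
Open Scope R_scope.

Fixpoint sumR (n : nat) (f : nat -> R) : R :=
  match n with
  | O => 0
  | S n' => sumR n' f + f n'
  end.

Definition Q (rho : R) (x y : Z) : R :=
  if Z.ltb y x then powerRZ (1 - rho) (x - y - 1) * rho else 0.

(* Q^0 = identity and
   Q^(m+1)(x,y) = sum_{w in Z} Q(x,w) Q^m(w,y); since Q(x,w) = 0 unless w < x
   and Q^m(w,y) = 0 unless y <= w, only w in [y, x-1] contribute, so the
   (exact) matrix product is the finite sum below over w = y + i, 0 <= i < x-y. *)
Fixpoint Qpow (rho : R) (m : nat) (x y : Z) : R :=
  match m with
  | O => if Z.eqb x y then 1 else 0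
  | S m' => sumR (Z.to_nat (x - y))
              (fun i => Q rho x (y + Z.of_nat i)%Z * Qpow rho m' (y + Z.of_nat i)%Z y)
  end.

Definition Qstar_inv (rho : R) (f : Z -> R) (z : Z) : R :=
  / rho * f (z - 1)%Z - (1 - rho) / rho * f z.

(* h : nat -> Z -> R (h l z, meaningful for 0 <= l <= k) is the (unique)
   solution h^{m,Y}_k of the defining system; Y is indexed from 1. *)
Definition is_h (rho : R) (m : nat) (Y : nat -> Z) (k : nat) (h : nat -> Z -> R) : Prop :=
  (forall l, (l < k)%nat -> forall z, Qstar_inv rho (h l) z = h (S l) z) /\
  (forall z, h k z = rho * powerRZ (1 - rho) (Y (m - k)%nat - z - 1)) /\
  (forall l, (l < k)%nat -> h l (Y (m - l)%nat) = 0).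

Definition G0 (rho : R) (m : nat) (Y : nat -> Z) (H : nat -> nat -> Z -> R) (z1 z2 : Z) : R :=
  sumR m (fun k => (1 - rho) / rho * Qpow rho (m - k) z1 (Y (m - k)%nat) * H k O z2).

Definition sumZ_to (f : Z -> R) (s : R) : Prop :=
  exists a b : R,
    is_series (fun n : nat => f (Z.of_nat n)) a /\
    is_series (fun n : nat => f (- Z.of_nat (S n))%Z) b /\
    s = a + b.

(* Main.v *)
Require Import Defs.
From Stdlib Require Import Reals ZArith Lra Lia.
From Coquelicot Require Import Coquelicot.
Open Scope R_scope.

Lemma sumR_ext n f g : (forall i, (i < n)%nat -> f i = g i) -> sumR n f = sumR n g.
Proof. induction n; simpl; intros H; [reflexivity|]. rewrite IHn by (intros; apply H; lia). rewrite H by lia. reflexivity. Qed.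

Lemma sumR_zero n f : (forall i, (i < n)%nat -> f i = 0) -> sumR n f = 0.
Proof. induction n; simpl; intros H; [reflexivity|]. rewrite IHn by (intros; apply H; lia). rewrite H by lia. ring. Qed.

Lemma sumR_single n f j : (j < n)%nat -> (forall i, (i < n)%nat -> i <> j -> f i = 0) -> sumR n f = f j.
Proof.
  induction n; simpl; intros Hj H; [lia|].
  destruct (Nat.eq_dec j n) as [->|Hne].
  - rewrite sumR_zero. ring. intros i Hi; apply H; lia.
  - rewrite IHn by (try lia; intros; apply H; lia). rewrite (H n) by lia. ring.
Qed.

Lemma sumR_scal n c f : sumR n (fun i => c * f i) = c * sumR n f.
Proof. induction n; simpl; [ring|]. rewrite IHn; ring. Qed.

Lemma sumR_minus n f g : sumR n (fun i => f i - g i) = sumR n f - sumR n g.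
Proof. induction n; simpl; [ring|]. rewrite IHn; ring. Qed.

Lemma sumR_const_after (u : nat -> R) M : (forall i, (M <= i)%nat -> u i = 0) ->
  forall N, (M <= N)%nat -> sumR N u = sumR M u.
Proof.
  intros H N HN. induction HN; [reflexivity|]. simpl. rewrite IHHN, H by lia. ring.
Qed.

Definition sumZ (A : Z) (n : nat) (F : Z -> R) := sumR n (fun i => F (A + Z.of_nat i)%Z).

Lemma sumZ_split A n1 n2 F : sumZ A (n1 + n2) F = sumZ A n1 F + sumZ (A + Z.of_nat n1) n2 F.
Proof.
  unfold sumZ. induction n2.
  - rewrite Nat.add_0_r. simpl. ring.
  - rewrite Nat.add_succ_r. simpl. rewrite IHn2.
    replace (A + Z.of_nat (n1 + n2))%Z with (A + Z.of_nat n1 + Z.of_nat n2)%Z by lia. ring.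
Qed.

Lemma sumZ_cons A n F : sumZ A (S n) F = F A + sumZ (A + 1) n F.
Proof.
  change (S n) with (1 + n)%nat. rewrite sumZ_split. unfold sumZ at 1. simpl.
  rewrite Z.add_0_r. f_equal. ring.
Qed.

Lemma sumZ_zero A n F : (forall z, (A <= z < A + Z.of_nat n)%Z -> F z = 0) -> sumZ A n F = 0.
Proof. intros H. unfold sumZ. apply sumR_zero. intros i Hi. apply H. lia. Qed.

Lemma sumZ_window F P N A n :
  (forall z, (z < P \/ P + Z.of_nat N <= z)%Z -> F z = 0) ->
  (A <= P)%Z -> (P + Z.of_nat N <= A + Z.of_nat n)%Z ->
  sumZ A n F = sumZ P N F.
Proof.
  intros H H1 H2.
  set (n1 := Z.to_nat (P - A)).
  set (n3 := (n - n1 - N)%nat).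
  replace n with (n1 + (N + n3))%nat by lia.
  rewrite !sumZ_split.
  replace (A + Z.of_nat n1)%Z with P by lia.
  rewrite (sumZ_zero A n1) by (intros; apply H; lia).
  rewrite (sumZ_zero (P + Z.of_nat N) n3) by (intros; apply H; lia). ring.
Qed.

Lemma sumZ_rev M F : sumZ (- Z.of_nat M) M F = sumR M (fun i => F (- Z.of_nat (S i))%Z).
Proof.
  induction M.
  - reflexivity.
  - rewrite sumZ_cons. cbn [sumR]. rewrite <- IHM.
    replace (- Z.of_nat (S M) + 1)%Z with (- Z.of_nat M)%Z by lia. ring.
Qed.

Lemma is_series_fin (u : nat -> R) M : (forall i, (M <= i)%nat -> u i = 0) ->
  is_series u (sumR M u).
Proof.
  intros H. unfold is_series. change (is_lim_seq (sum_n u) (sumR M u)).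
  apply is_lim_seq_ext_loc with (u := fun _ => sumR M u); [|apply is_lim_seq_const].
  exists M. intros N HN.
  assert (E : forall N, sum_n u N = sumR (S N) u).
  { induction N0. rewrite sum_O. simpl. ring. rewrite sum_Sn, IHN0. simpl. reflexivity. }
  rewrite E. symmetry. apply sumR_const_after; auto.
Qed.

Lemma sumZ_to_fin F P N : (forall z, (z < P \/ P + Z.of_nat N <= z)%Z -> F z = 0) ->
  sumZ_to F (sumZ P N F).
Proof.
  intros H.
  set (M := (Z.to_nat (Z.abs P) + N)%nat).
  exists (sumR M (fun n => F (Z.of_nat n))), (sumR M (fun n => F (- Z.of_nat (S n))%Z)).
  split; [|split].
  - apply is_series_fin. intros i Hi. apply H. right. lia.
  - apply is_series_fin. intros i Hi. apply H. left. lia.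
  - rewrite <- (sumZ_window F P N (- Z.of_nat M) (M + M)); auto; try lia.
    rewrite sumZ_split, sumZ_rev. replace (- Z.of_nat M + Z.of_nat M)%Z with 0%Z by lia.
    unfold sumZ. rewrite Rplus_comm. f_equal.
Qed.

Lemma Qsi_ext rho f g z : (forall w, f w = g w) -> Qstar_inv rho f z = Qstar_inv rho g z.
Proof. intros H; unfold Qstar_inv; rewrite !H; reflexivity. Qed.

Lemma Qsi_sum rho n F z : Qstar_inv rho (fun w => sumR n (fun i => F i w)) z
  = sumR n (fun i => Qstar_inv rho (F i) z).
Proof. induction n; unfold Qstar_inv in *; simpl; [ring|]. rewrite <- IHn. ring. Qed.

Lemma Qsi_scal rho f c z : Qstar_inv rho (fun w => f w * c) z = Qstar_inv rho f z * c.
Proof. unfold Qstar_inv; ring. Qed.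

Lemma Qsi_scal_l rho f c z : Qstar_inv rho (fun w => c * f w) z = c * Qstar_inv rho f z.
Proof. unfold Qstar_inv; ring. Qed.

Lemma Qsi_minus rho f g z : Qstar_inv rho (fun w => f w - g w) z = Qstar_inv rho f z - Qstar_inv rho g z.
Proof. unfold Qstar_inv; ring. Qed.

Lemma Qsi_exp rho a z : 0 < rho < 1 ->
  Qstar_inv rho (fun w => rho * powerRZ (1 - rho) (a - w - 1)) z = 0.
Proof.
  intros Hr. unfold Qstar_inv.
  replace (a - (z - 1) - 1)%Z with ((a - z - 1) + 1)%Z by lia.
  rewrite powerRZ_add by lra. simpl. field. lra.
Qed.

Lemma prop_range (r : R) (d : Z -> R) (P R0 a : Z) : r <> 0 ->
  (forall z, (P < z <= R0)%Z -> d (z - 1)%Z = r * d z) ->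
  (P <= a <= R0)%Z -> d a = 0 -> forall z, (P <= z <= R0)%Z -> d z = 0.
Proof.
  intros Hr Hs Ha Hd z Hz.
  destruct (Z.le_ge_cases a z).
  - assert (U : forall n, (a + Z.of_nat n <= R0)%Z -> d (a + Z.of_nat n)%Z = 0).
    { induction n; intros Hn.
      - rewrite Z.add_0_r; auto.
      - assert (E := Hs (a + Z.of_nat (S n))%Z ltac:(lia)).
        replace (a + Z.of_nat (S n) - 1)%Z with (a + Z.of_nat n)%Z in E by lia.
        rewrite IHn in E by lia.
        destruct (Rmult_integral _ _ (eq_sym E)); [contradiction|auto]. }
    replace z with (a + Z.of_nat (Z.to_nat (z - a)))%Z by lia. apply U. lia.
  - assert (U : forall n, (P <= a - Z.of_nat n)%Z -> d (a - Z.of_nat n)%Z = 0).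
    { induction n; intros Hn.
      - rewrite Z.sub_0_r; auto.
      - assert (E := Hs (a - Z.of_nat n)%Z ltac:(lia)).
        replace (a - Z.of_nat n - 1)%Z with (a - Z.of_nat (S n))%Z in E by lia.
        rewrite E, IHn by lia. ring. }
    replace z with (a - Z.of_nat (Z.to_nat (a - z)))%Z by lia. apply U. lia.
Qed.

Lemma qinv_uniq rho f g P R0 a : 0 < rho < 1 ->
  (forall z, (P < z <= R0)%Z -> Qstar_inv rho f z = Qstar_inv rho g z) ->
  (P <= a <= R0)%Z -> f a = g a -> forall z, (P <= z <= R0)%Z -> f z = g z.
Proof.
  intros Hr Hs Ha Hfa z Hz.
  apply Rminus_diag_uniq.
  apply (prop_range (1 - rho) (fun w => f w - g w) P R0 a); auto; try lra.
  intros w Hw. specialize (Hs w Hw). unfold Qstar_inv in Hs.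
  assert (E : f (w - 1)%Z - g (w - 1)%Z =
     rho * (/ rho * f (w - 1)%Z - (1 - rho) / rho * f w - (/ rho * g (w - 1)%Z - (1 - rho) / rho * g w))
     + (1 - rho) * (f w - g w)) by (field; lra).
  rewrite E, Hs. ring.
Qed.

Lemma qinv_uniq_full rho f g a : 0 < rho < 1 ->
  (forall z, Qstar_inv rho f z = Qstar_inv rho g z) -> f a = g a -> forall z, f z = g z.
Proof.
  intros Hr Hs Ha z. apply (qinv_uniq rho f g (Z.min a z) (Z.max a z) a); auto; lia.
Qed.

Lemma Q_shift rho x y x' y' : (x - y = x' - y')%Z -> Q rho x y = Q rho x' y'.
Proof.
  intros H. unfold Q. destruct (Z.ltb_spec y x), (Z.ltb_spec y' x'); try lia; try reflexivity.
  replace (x' - y' - 1)%Z with (x - y - 1)%Z by lia. reflexivity.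
Qed.

Lemma Qpow_shift rho m x y : Qpow rho m x y = Qpow rho m (x - y) 0.
Proof.
  revert x y. induction m; intros x y; simpl.
  - destruct (Z.eqb_spec x y), (Z.eqb_spec (x - y) 0); try lia; reflexivity.
  - rewrite Z.sub_0_r. apply sumR_ext. intros i Hi.
    f_equal; [apply Q_shift; lia|]. rewrite IHm. f_equal. lia.
Qed.

Lemma Qpow_lt rho m x y : (x < y)%Z -> Qpow rho m x y = 0.
Proof.
  intros H. destruct m; simpl.
  - destruct (Z.eqb_spec x y); [lia|reflexivity].
  - replace (Z.to_nat (x - y)) with 0%nat by lia. reflexivity.
Qed.

Lemma Qpow_le_S rho m x y : (x <= y)%Z -> Qpow rho (S m) x y = 0.
Proof. intros H. simpl. replace (Z.to_nat (x - y)) with 0%nat by lia. reflexivity. Qed.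

Lemma Qpow_rec rho m d : 0 < rho < 1 -> (0 <= d)%Z ->
  Qpow rho (S m) (d + 1) 0 = rho * Qpow rho m d 0 + (1 - rho) * Qpow rho (S m) d 0.
Proof.
  intros Hr Hd. cbn [Qpow].
  rewrite !Z.sub_0_r.
  replace (Z.to_nat (d + 1)) with (S (Z.to_nat d)) by lia.
  cbn [sumR]. rewrite <- sumR_scal. rewrite Rplus_comm. f_equal.
  - rewrite Z2Nat.id by lia. unfold Q.
    destruct (Z.ltb_spec (0 + d) (d + 1)); try lia.
    replace (d + 1 - (0 + d) - 1)%Z with 0%Z by lia. rewrite Z.add_0_l. simpl. ring.
  - apply sumR_ext. intros i Hi. unfold Q.
    destruct (Z.ltb_spec (0 + Z.of_nat i) (d + 1)), (Z.ltb_spec (0 + Z.of_nat i) d); try lia.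
    replace (d + 1 - (0 + Z.of_nat i) - 1)%Z with ((d - (0 + Z.of_nat i) - 1) + 1)%Z by lia.
    rewrite powerRZ_add by lra. simpl. ring.
Qed.

Lemma Qpow_step rho m x z : 0 < rho < 1 ->
  Qstar_inv rho (Qpow rho (S m) x) z = Qpow rho m x z.
Proof.
  intros Hr. unfold Qstar_inv.
  rewrite (Qpow_shift rho (S m) x (z - 1)), (Qpow_shift rho (S m) x z), (Qpow_shift rho m x z).
  replace (x - (z - 1))%Z with ((x - z) + 1)%Z by lia.
  destruct (Z_lt_le_dec (x - z) 0).
  - rewrite !Qpow_le_S by lia. rewrite Qpow_lt by lia. field. lra.
  - rewrite Qpow_rec by (auto; lia). field. lra.
Qed.

Definition Hext (H2 : nat -> nat -> Z -> R) k l z := if (l <=? k)%nat then H2 k l z else 0.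

Definition Kf rho N2 (Y2 : nat -> Z) H2 l z3 z :=
  Qpow rho (N2 - l) z3 z
  - sumR N2 (fun k => (1 - rho) / rho * Qpow rho (N2 - k) z3 (Y2 (N2 - k)%nat) * Hext H2 k l z).

Lemma Hext_step rho N2 Y2 H2 k l z : 0 < rho < 1 -> is_h rho N2 Y2 k (H2 k) ->
  Qstar_inv rho (Hext H2 k l) z = Hext H2 k (S l) z.
Proof.
  intros Hr [Hs [Ht Hz]]. unfold Hext at 2.
  destruct (Nat.leb_spec (S l) k).
  - rewrite (Qsi_ext rho _ (H2 k l)). apply Hs; lia.
    intros w. unfold Hext. destruct (Nat.leb_spec l k); [reflexivity|lia].
  - destruct (Nat.eq_dec l k) as [->|Hne].
    + rewrite (Qsi_ext rho _ (fun w => rho * powerRZ (1 - rho) (Y2 (N2 - k)%nat - w - 1))).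
      apply Qsi_exp; auto.
      intros w. unfold Hext. rewrite Nat.leb_refl. apply Ht.
    + rewrite (Qsi_ext rho _ (fun _ => 0)). unfold Qstar_inv; ring.
      intros w. unfold Hext. destruct (Nat.leb_spec l k); [lia|reflexivity].
Qed.

Lemma K_step rho N2 Y2 H2 l z3 z : 0 < rho < 1 -> (l < N2)%nat ->
  (forall j, (j < N2)%nat -> is_h rho N2 Y2 j (H2 j)) ->
  Qstar_inv rho (Kf rho N2 Y2 H2 l z3) z = Kf rho N2 Y2 H2 (S l) z3 z.
Proof.
  intros Hr Hl Hh. unfold Kf. rewrite Qsi_minus.
  replace (N2 - l)%nat with (S (N2 - S l)) by lia. rewrite Qpow_step by auto.
  f_equal. rewrite Qsi_sum. apply sumR_ext. intros i Hi.
  rewrite Qsi_scal_l. rewrite (Hext_step rho N2 Y2) by auto. reflexivity.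
Qed.

Lemma K_top rho N2 Y2 H2 z3 z : Kf rho N2 Y2 H2 N2 z3 z = if Z.eqb z3 z then 1 else 0.
Proof.
  unfold Kf. rewrite Nat.sub_diag. rewrite sumR_zero. simpl; ring.
  intros i Hi. unfold Hext. destruct (Nat.leb_spec N2 i); [lia|ring].
Qed.

Lemma K_zero rho N2 Y2 H2 l z3 : 0 < rho < 1 -> (l < N2)%nat ->
  (forall j, (j < N2)%nat -> is_h rho N2 Y2 j (H2 j)) ->
  Kf rho N2 Y2 H2 l z3 (Y2 (N2 - l)%nat) = 0.
Proof.
  intros Hr Hl Hh. unfold Kf. rewrite (sumR_single _ _ l Hl).
  - unfold Hext. rewrite Nat.leb_refl. destruct (Hh l Hl) as [_ [Ht _]]. rewrite Ht.
    replace (Y2 (N2 - l)%nat - Y2 (N2 - l)%nat - 1)%Z with (- (1))%Z by lia.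
    simpl. field. lra.
  - intros i Hi Hne. unfold Hext. destruct (Nat.leb_spec l i).
    + destruct (Hh i Hi) as [_ [_ Hz]]. rewrite Hz by lia. ring.
    + ring.
Qed.

Lemma K_low rho N2 Y2 H2 z3 z :
  (forall j, (1 <= j <= N2)%nat -> (Y2 N2 <= Y2 j)%Z) ->
  (z3 < z)%Z -> (z3 < Y2 N2)%Z -> Kf rho N2 Y2 H2 0 z3 z = 0.
Proof.
  intros Hm H1 H2'. unfold Kf. rewrite Qpow_lt by auto. rewrite sumR_zero. ring.
  intros i Hi. rewrite Qpow_lt. ring. specialize (Hm (N2 - i)%nat ltac:(lia)). lia.
Qed.

Lemma K_high rho N2 Y2 H2 z3 : 0 < rho < 1 ->
  (forall j, (j < N2)%nat -> is_h rho N2 Y2 j (H2 j)) ->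
  (forall j, (1 <= j <= N2)%nat -> (Y2 j <= Y2 1%nat)%Z) ->
  (Y2 1%nat < z3)%Z -> forall j l, l = (N2 - j)%nat -> (j <= N2)%nat ->
  forall z, (z < z3)%Z -> Kf rho N2 Y2 H2 l z3 z = 0.
Proof.
  intros Hr Hh Hm Hz3. induction j; intros l -> Hj z Hz.
  - rewrite Nat.sub_0_r, K_top. destruct (Z.eqb_spec z3 z); [lia|reflexivity].
  - set (l := (N2 - S j)%nat).
    apply (qinv_uniq rho (Kf rho N2 Y2 H2 l z3) (fun _ => 0)
             (Z.min z (Y2 (N2 - l)%nat)) (z3 - 1) (Y2 (N2 - l)%nat)); auto.
    + intros w Hw. rewrite K_step by (auto; lia). unfold Qstar_inv.
      rewrite (IHj (S l)) by lia. ring.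
    + specialize (Hm (N2 - l)%nat ltac:(lia)). lia.
    + apply K_zero; auto; lia.
    + lia.
Qed.

Lemma main_sum rho N2 Y2 H2 (f : Z -> R) (g : nat -> Z -> R) P n : 0 < rho < 1 ->
  (forall j, (j < N2)%nat -> is_h rho N2 Y2 j (H2 j)) ->
  (forall z, g N2 z = f z) ->
  (forall l z, (l < N2)%nat -> Qstar_inv rho (g l) z = g (S l) z) ->
  (forall l, (l < N2)%nat -> g l (Y2 (N2 - l)%nat) = 0) ->
  (forall l, (l < N2)%nat -> (P <= Y2 (N2 - l)%nat < P + Z.of_nat n)%Z) ->
  forall j l, l = (N2 - j)%nat -> (j <= N2)%nat ->
  forall z, (P <= z < P + Z.of_nat n)%Z ->
  sumZ P n (fun z3 => Kf rho N2 Y2 H2 l z3 z * f z3) = g l z.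
Proof.
  intros Hr Hh Hg0 Hgs Hgz Hwin. induction j; intros l -> Hj z Hz.
  - rewrite Nat.sub_0_r, Hg0. unfold sumZ.
    rewrite (sumR_single _ _ (Z.to_nat (z - P))).
    2: lia.
    2: { intros i Hi Hne. cbv beta. rewrite K_top.
         destruct (Z.eqb_spec (P + Z.of_nat i) z); [lia|ring]. }
    cbv beta. rewrite K_top. replace (P + Z.of_nat (Z.to_nat (z - P)))%Z with z by lia.
    rewrite Z.eqb_refl. ring.
  - set (l := (N2 - S j)%nat).
    apply (qinv_uniq rho (fun z => sumZ P n (fun z3 => Kf rho N2 Y2 H2 l z3 z * f z3)) (g l)
             P (P + Z.of_nat n - 1) (Y2 (N2 - l)%nat)); auto.
    + intros w Hw. unfold sumZ. rewrite Qsi_sum.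
      rewrite Hgs by lia.
      rewrite <- (IHj (S l)) by lia. unfold sumZ. apply sumR_ext. intros i Hi.
      rewrite Qsi_scal, K_step by (auto; lia). reflexivity.
    + specialize (Hwin l ltac:(lia)). lia.
    + rewrite Hgz by lia. unfold sumZ. apply sumR_zero. intros i Hi.
      rewrite K_zero by (auto; lia). ring.
    + lia.
Qed.

Lemma X0_mono (X0 : nat -> Z) n : (forall i : nat, (1 <= i)%nat -> (i < n)%nat -> (X0 (S i) < X0 i)%Z) ->
  forall i j, (1 <= i)%nat -> (i <= j)%nat -> (j <= n)%nat -> (X0 j <= X0 i)%Z.
Proof.
  intros H i j Hi Hij. induction Hij; intros Hn; [lia|].
  specialize (IHHij ltac:(lia)). specialize (H m ltac:(lia) ltac:(lia)). lia.
Qed.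

Theorem lemma2p5 (rho : R) (N1 N2 : nat) (X0 : nat -> Z) (k : nat) :
  0 < rho < 1 ->
  (0 < N1)%nat -> (0 < N2)%nat ->
  (forall i : nat, (1 <= i)%nat -> (i < N1 + N2)%nat -> (X0 (S i) < X0 i)%Z) ->
  (k <= N1 - 1)%nat ->
  forall (hX h1 : nat -> Z -> R) (H2 : nat -> nat -> Z -> R),
    is_h rho (N1 + N2) X0 (k + N2) hX ->
    is_h rho N1 X0 k h1 ->
    (forall j : nat, (j < N2)%nat -> is_h rho N2 (fun i => X0 (N1 + i)%nat) j (H2 j)) ->
    forall z : Z,
      sumZ_to
        (fun z3 : Z => (Qpow rho N2 z3 z - G0 rho N2 (fun i => X0 (N1 + i)%nat) H2 z3 z) * h1 O z3)
        (hX O z).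
Proof.
  intros Hr HN1 HN2 Hdec Hk hX h1 H2 [hXs [hXt hXz]] [h1s [h1t h1z]] Hh z.
  set (Y2 := fun i => X0 (N1 + i)%nat).
  assert (Hmono := X0_mono X0 (N1 + N2) Hdec).
  assert (HA : forall j l, l = (k - j)%nat -> (j <= k)%nat -> forall w, hX (N2 + l)%nat w = h1 l w).
  { induction j; intros l -> Hj w.
    - rewrite Nat.sub_0_r. rewrite Nat.add_comm, hXt, h1t.
      replace (N1 + N2 - (k + N2))%nat with (N1 - k)%nat by lia. reflexivity.
    - set (l := (k - S j)%nat).
      apply (qinv_uniq_full rho (hX (N2 + l)%nat) (h1 l) (X0 (N1 - l)%nat)); auto.
      + intros w'. rewrite hXs by lia. rewrite h1s by lia.
        replace (S (N2 + l)) with (N2 + S l)%nat by lia. apply IHj; lia.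
      + rewrite h1z by lia. replace (N1 - l)%nat with (N1 + N2 - (N2 + l))%nat by lia.
        apply hXz; lia. }
  set (P := Z.min z (Y2 N2)).
  set (Rr := Z.max z (Y2 1%nat)).
  set (n := Z.to_nat (Rr - P + 1)).
  set (F := fun z3 : Z => (Qpow rho N2 z3 z - G0 rho N2 (fun i => X0 (N1 + i)%nat) H2 z3 z) * h1 O z3).
  assert (HK0 : forall z3, F z3 = Kf rho N2 Y2 H2 0 z3 z * h1 O z3).
  { intros z3. unfold F, Kf, G0. rewrite Nat.sub_0_r. reflexivity. }
  assert (Hm1 : forall j, (1 <= j <= N2)%nat -> (Y2 N2 <= Y2 j)%Z).
  { intros j Hj. unfold Y2. apply Hmono; lia. }
  assert (Hm2 : forall j, (1 <= j <= N2)%nat -> (Y2 j <= Y2 1%nat)%Z).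
  { intros j Hj. unfold Y2. apply Hmono; lia. }
  assert (Hval : sumZ P n F = hX O z).
  { unfold sumZ. rewrite (sumR_ext _ _ (fun i => Kf rho N2 Y2 H2 0 (P + Z.of_nat i)%Z z * h1 O (P + Z.of_nat i)%Z))
      by (intros; apply HK0).
    apply (main_sum rho N2 Y2 H2 (h1 O) hX P n Hr Hh) with (j := N2); auto; try lia.
    - intros w. rewrite <- (Nat.add_0_r N2) at 1. apply (HA k); lia.
    - intros l w Hl. apply hXs. lia.
    - intros l Hl. unfold Y2. replace (N1 + (N2 - l))%nat with (N1 + N2 - l)%nat by lia.
      apply hXz. lia.
    - intros l Hl. specialize (Hm1 (N2 - l)%nat ltac:(lia)).
      specialize (Hm2 (N2 - l)%nat ltac:(lia)). lia. }
  rewrite <- Hval. apply sumZ_to_fin.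
  intros z3 Hz3. change (F z3 = 0). rewrite HK0. destruct Hz3 as [Hz3|Hz3].
  - rewrite (K_low rho N2 Y2 H2); auto; try lia. ring.
  - rewrite (K_high rho N2 Y2 H2 z3 Hr Hh Hm2 ltac:(lia) N2 0); auto; try lia. ring.
Qed.
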